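(* Let $A\in \mathbb{R}^{m\times n}$ and $b\in \mathbb{R}^m$ with $m<n$. Suppose that the linear system $Ax=b$ is consistent and has a solution $x_*$. If $x_*$ has more than $\operatorname{rank}(A)$ nonzero entries, then $Ax=b$ has infinitely many solutions with the same sign pattern as $x_*$.
   Context: The sign function is $\operatorname{sign}(r)=1,0,-1$ for $r>0$, $r=0$, $r<0$. Two vectors have the same sign pattern if their entrywise signs agree. *)

(* Defs.v *)
From HB Require Import structures.
From mathcomp Require Import all_boot all_order all_algebra.
From mathcomp Require Import boolp classical_sets cardinality reals.
Set Implicit Arguments.
Unset Strict Implicit.
Unset Printing Implicit Defensive.
Import Order.TTheory GRing.Theory Num.Theory.
Local Open Scope ring_scope.

Definition nnz (R : realType) (n : nat) (x : 'cV[R]_n) : nat :=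
  #|[set i : 'I_n | x i 0 != 0]|.

Definition same_sign (R : realType) (n : nat) (x y : 'cV[R]_n) : Prop :=
  forall i : 'I_n, Num.sg (x i 0) = Num.sg (y i 0).

(* Main.v *)
Require Import Defs.
From HB Require Import structures.
From mathcomp Require Import all_boot all_order all_algebra.
From mathcomp Require Import boolp classical_sets cardinality reals.
Import Order.TTheory GRing.Theory Num.Theory.
Local Open Scope ring_scope.
Local Open Scope classical_set_scope.
From mathcomp Require Import lra.
Lemma sg_pert (R : realType) (x e : R) : `|e| < `|x| -> Num.sg (x + e) = Num.sg x.
Proof.
case: (ltrgtP x 0) => [x0|x0|->].
- rewrite (ltr0_norm x0) ltr_norml => /andP[h1 h2].
  by rewrite !ltr0_sg //; lra.
- rewrite (gtr0_norm x0) ltr_norml => /andP[h1 h2].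
  by rewrite !gtr0_sg //; lra.
- by rewrite normr0 normr_lt0.
Qed.

Lemma exists_dir (R : realType) m n (A : 'M[R]_(m,n)) (xs : 'cV[R]_n) :
  (\rank A < nnz xs)%N ->
  exists d : 'cV[R]_n, [/\ d != 0, A *m d = 0 & forall i, xs i 0 = 0 -> d i 0 = 0].
Proof.
rewrite /nnz; set S := [set i | xs i 0 != 0]%SET => hrk.
pose f : 'I_#|S| -> 'I_n := enum_val.
have fS j : xs (f j) 0 != 0 by have := enum_valP j; rewrite inE.
have finj : injective f by exact: enum_val_inj.
pose Sel : 'M[R]_(n, #|S|) := \matrix_(i, j) ((f j == i)%:R).
pose M := (A *m Sel)^T.
pose K := kermx M.
have Kn0 : K != 0.
  rewrite -mxrank_eq0 /K mxrank_ker /M mxrank_tr -lt0n subn_gt0.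
  exact: leq_ltn_trans (mxrankM_maxl _ _) hrk.
have /existsP[r hr] : [exists r, row r K != 0].
  apply: contraR Kn0 => /existsPn h; apply/eqP/row_matrixP => r.
  by rewrite row0; apply/eqP; move: (h r); rewrite negbK.
pose v := (row r K)^T.
have dE i : (Sel *m v) i 0 = \sum_j (f j == i)%:R * v j 0.
  by rewrite !mxE; apply: eq_bigr => j _; rewrite mxE.
exists (Sel *m v); split.
- apply/eqP => d0; move/negP: hr; apply; apply/eqP/rowP => j.
  have := congr1 (fun D : 'cV_n => D (f j) 0) d0; rewrite dE mxE (bigD1 j) //= eqxx mul1r.
  rewrite big1 ?addr0; last by move=> j' hj'; rewrite (inj_eq finj) (negbTE hj') mul0r.
  by rewrite /v !mxE; apply.
- rewrite mulmxA -[A *m Sel]trmxK -/M -[v]trmxK -trmx_mul /v trmxK -row_mul /K mulmx_ker row0.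
  by rewrite trmx0.
- move=> i xi0; rewrite dE big1 // => j _.
  case: eqP => [fj|]; last by rewrite mul0r.
  by move: (fS j); rewrite fj xi0 eqxx.
Qed.

Theorem lemma2p2 (R : realType) (m n : nat) (A : 'M[R]_(m, n)) (b : 'cV[R]_m)
  (xs : 'cV[R]_n) :
  (m < n)%N ->
  A *m xs = b ->
  (\rank A < nnz xs)%N ->
  infinite_set [set y : 'cV[R]_n | A *m y = b /\ same_sign y xs].
Proof.
move=> _ hb hrk.
have [d [dn0 Ad dS]] := @exists_dir R m n A xs hrk.
pose c := \sum_i `|d i 0| / `|xs i 0|.
have c0 : 0 <= c by apply: sumr_ge0 => i _; rewrite divr_ge0.
pose t (k : nat) : R := (c + k.+1%:R)^-1.
have Dpos k : 0 < c + k.+1%:R by rewrite ltr_wpDl // ltr0n.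
have tpos k : 0 < t k by rewrite invr_gt0.
have tinj : injective t.
  move=> k k' /invr_inj /addrI /eqP; rewrite eqr_nat => /eqP; case.
  done.
pose y k := xs + t k *: d.
have yinj : injective y.
  move=> k k' /addrI /eqP; rewrite -subr_eq0 -scalerBl scaler_eq0 (negbTE dn0) orbF.
  by rewrite subr_eq0 => /eqP /tinj.
have ysub k : A *m y k = b /\ same_sign (y k) xs.
  split; first by rewrite /y mulmxDr -scalemxAr Ad scaler0 addr0.
  move=> i; rewrite /y !mxE.
  have [xi0|xin0] := eqVneq (xs i 0) 0; first by rewrite (dS i xi0) mulr0 addr0.
  apply: sg_pert.
  have xpos : 0 < `|xs i 0| by rewrite normr_gt0.
  have hi : `|d i 0| / `|xs i 0| <= c.
    by rewrite /c (bigD1 i) //= lerDl sumr_ge0 // => j _; rewrite divr_ge0.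
  rewrite ler_pdivrMr // in hi.
  rewrite normrM (gtr0_norm (tpos k)) /t ltr_pdivrMl //.
  have : 0 < k.+1%:R * `|xs i 0| :> R by rewrite mulr_gt0 // ltr0n.
  by rewrite mulrDl; lra.
move=> fin; apply: infinite_nat.
set Y := [set z | _] in fin.
pose g (z : 'cV[R]_n) : nat :=
  match pselect (exists k, y k = z) with
  | left h => proj1_sig (cid h)
  | right _ => 0%N end.
have gy k : g (y k) = k.
  rewrite /g; case: pselect => [h|]; last by case; exists k.
  by case: (cid h) => k' /= /yinj.
apply: (sub_finite_set _ (finite_image g fin)) => k _.
by exists (y k) => //; exact: ysub.
Qed.
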